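(* Let $S$ be a non-abelian finite simple group with universal covering group $\widetilde{S}$, and let $\chi$ be a non-principal irreducible character of $\widetilde{S}$. Then $S$ has a non-principal irreducible character of degree at most $\chi(1)^2-1$.
   Context: The universal covering group $\widetilde{S}$ of a non-abelian finite simple group $S$ is its Schur cover: the perfect central extension of $S$ by its Schur multiplier. *)

(* Defs.v *)
From mathcomp Require Import all_boot all_order all_algebra all_fingroup all_solvable all_field all_character.
Set Implicit Arguments. Unset Strict Implicit. Unset Printing Implicit Defensive.
Import GroupScope.

Definition covering_group (gT sT : finGroupType) (G : {group gT})
    (S : {group sT}) (f : {morphism G >-> sT}) : Prop :=
  [/\ f @* G = S, 'ker f \subset 'Z(G) & [~: G, G] = G].

Definition universal_covering_group (gT sT : finGroupType) (G : {group gT})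
    (S : {group sT}) (f : {morphism G >-> sT}) : Prop :=
  covering_group S f /\
  forall (hT : finGroupType) (H : {group hT}) (g : {morphism H >-> sT}),
    covering_group S g ->
    exists h : {morphism G >-> hT},
      h @* G = H /\ {in G, forall x, g (h x) = f x}.

(* Main.v *)
Require Import Defs.
From mathcomp Require Import all_boot all_order all_algebra all_fingroup all_solvable all_field all_character.
From mathcomp Require Import zify.
From Stdlib Require Import Lia.
Import GroupScope GRing.Theory Num.Theory.
Local Open Scope ring_scope.

Theorem proposition3p1 (sT : finGroupType) (S : {group sT})
    (gT : finGroupType) (U : {group gT}) (f : {morphism U >-> sT}) :
  simple S -> ~~ abelian S ->
  universal_covering_group S f ->
  forall i : Iirr U, i != 0 ->
  exists j : Iirr S, j != 0 /\ 'chi_j 1%g <= 'chi_i 1%g ^+ 2 - 1.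
Proof.
move=> _ _ [[imf kerZ perf] _] i nz_i.
pose psi := 'chi_i * ('chi_i)^*%CF.
have Npsi : psi \is a character by rewrite rpredM ?cfConjC_char ?irr_char.
have psi1 : psi 1%g = 'chi_i 1%g ^+ 2.
  by rewrite !cfunE irr1_degree rmorph_nat expr2.
have dot1 : '[psi, 1] = 1.
  rewrite -(cfnorm_irr i) !cfdotE; congr (_ * _); apply: eq_bigr => x Gx.
  by rewrite !cfunE cfun1E Gx conjC1 mulr1.
have n1 : 'chi_i 1%g != 1.
  apply: contra nz_i => /eqP c1.
  have lin : 'chi_i \is a linear_char by rewrite qualifE/= irr_char c1 eqxx.
  move: lin; rewrite lin_irr_der1 derg1 perf => sUK.
  rewrite -irr_eq1; apply/eqP/cfun_inP => x Ux.
  have: x \in cfker 'chi_i := subsetP sUK x Ux.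
  by rewrite cfkerEirr inE => /eqP->; rewrite c1 cfun1E Ux.
have [n Dn n2] : exists2 n : nat, 'chi_i 1%g = n%:R & (1 < n)%N.
  have := irr1_gt0 i; move: n1; rewrite irr1_degree.
  rewrite pnatr_eq1 ltr0n; move: (irr_degree (socle_of_Iirr i)) => m m1 m0.
  by exists m => //; case: m m1 m0 => [|[|]].
have kpsi : 'ker f \subset cfker psi.
  apply/subsetP => x Kx.
  have Zx : x \in 'Z(U) := subsetP kerZ x Kx.
  have Ux : x \in U := subsetP (center_sub U) x Zx.
  have cZ : x \in 'Z('chi_i)%CF.
    by rewrite -cap_cfcenter_irr in Zx; move/bigcapP: Zx; apply.
  rewrite irr_cfcenterE // in cZ.
  by rewrite cfkerEchar // inE Ux psi1 /psi !cfunE -normCK (eqP cZ) eqxx.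
have c0 : 0 \in irr_constt psi by rewrite irr_consttE irr0 dot1 oner_eq0.
have [phi Nphi Dpsi] := constt_charP _ Npsi c0.
have phi1 : phi 1%g = 'chi_i 1%g ^+ 2 - 1.
  have := psi1; rewrite Dpsi cfunE irr0 cfun1E group1 => <-.
  by rewrite addrAC subrr add0r.
have nz_phi : phi != 0.
  apply/eqP => phi0; move: phi1; rewrite phi0 cfunE Dn.
  move/esym/eqP; rewrite subr_eq0 -natrX pnatr_eq1; nia.
have [k ck] := neq0_has_constt nz_phi.
have [phi' Nphi' Dphi] := constt_charP _ Nphi ck.
have nz_k : k != 0.
  apply: contraTneq ck => ->; rewrite irr_consttE negbK.
  move: dot1; rewrite Dpsi cfdotDl irr0 cfnorm1 -{2}[1]addr0 => /addrI ->.
  by [].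
have ck' : k \in irr_constt psi.
  apply/constt_charP => //; exists ('chi_0 + phi'); first by rewrite rpredD ?irr_char.
  by rewrite Dpsi Dphi addrCA.
have kk := subset_trans kpsi (cfker_constt Npsi ck').
have nsK : 'ker f <| U := ker_normal f.
have [g injg img] := first_isom f.
have isoG : isom (U / 'ker f)%G S g.
  by apply/isomP; split => //; rewrite img imf.
exists (isom_Iirr isoG (quo_Iirr ('ker f) k)); split.
  by rewrite isom_Iirr_eq0 quo_Iirr_eq0.
rewrite isom_IirrE cfIsom1 quo_IirrE // cfQuo1 -phi1 Dphi cfunE lerDl.
exact: char1_ge0.
Qed.
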